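(* Under the hypotheses of the two preceding theorems (discrepancy principle with fixed $1<\underline\tau\le\overline\tau<\infty$, $\varphi^\dagger$ satisfying the VSC with $\sigma\in(0,1]$ and a concave increasing index function $\Psi$), $$D^{\mathrm{sym}}_J(\varphi^\delta_{\alpha(\delta,f^\delta)},\varphi^\dagger)=\mathcal O(\Psi(\delta))\quad\text{as }\delta\to0.$$
   Context: $\mathcal V$ Banach, $\mathcal H$ Hilbert, $\mathcal T:\mathcal V\to\mathcal H$ bounded linear injective compact; $J:\mathcal V\to[0,\infty)$ convex; Bregman distance $D_J(u,u^* )=J(u)-J(u^* )-\langle p,u-u^*\rangle$ for $p\in\partial J(u^* )$, and symmetric Bregman distance $D_J^{\mathrm{sym}}(u,u^* )=D_J(u,u^* )+D_J(u^*,u)$; here $D_J(\varphi^\dagger,\varphi^\delta_\alpha)$ uses the subgradient $\frac1\alpha\mathcal T^*(f^\delta-\mathcal T\varphi^\delta_\alpha)\in\partial J(\varphi^\delta_\alpha)$. Noise level $\delta>0$, $\|f^\dagger-f^\delta\|\le\delta$; $\varphi^\delta_\alpha$ minimizes $\frac12\|\mathcal T\varphi-f^\delta\|^2+\alpha J(\varphi)$; $\varphi^\dagger$ is a $J$-minimizing solution of $\mathcal T\varphi=f^\dagger$. Discrepancy principle: $\underline\tau\delta\le\|\mathcal T\varphi^\delta_{\alpha(\delta,f^\delta)}-f^\delta\|\le\overline\tau\delta$. VSC: there exist $\sigma\in(0,1]$ and a concave index function $\Psi$ (continuous, increasing, $\Psi(0)=0$) with $\frac\sigma2D_J(\varphi,\varphi^\dagger)\le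 J(\varphi)-J(\varphi^\dagger)+\Psi(\|\mathcal T\varphi-\mathcal T\varphi^\dagger\|)$ for all $\varphi$. *)

(* Defs.v *)
From Stdlib Require Import Reals Lra.
Open Scope R_scope.

Definition vs_axioms (V : Type) (zero : V) (add : V -> V -> V) (opp : V -> V)
  (scal : R -> V -> V) : Prop :=
  (forall x y z, add x (add y z) = add (add x y) z) /\
  (forall x y, add x y = add y x) /\
  (forall x, add x zero = x) /\
  (forall x, add x (opp x) = zero) /\
  (forall a b x, scal a (scal b x) = scal (a * b) x) /\
  (forall x, scal 1 x = x) /\
  (forall a x y, scal a (add x y) = add (scal a x) (scal a y)) /\
  (forall a b x, scal (a + b) x = add (scal a x) (scal b x)).

Definition complete_wrt (V : Type) (add : V -> V -> V) (opp : V -> V)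
  (norm : V -> R) : Prop :=
  forall u : nat -> V,
    (forall eps, 0 < eps -> exists N, forall m n, (N <= m)%nat -> (N <= n)%nat ->
        norm (add (u m) (opp (u n))) < eps) ->
    exists l, forall eps, 0 < eps -> exists N, forall n, (N <= n)%nat ->
        norm (add (u n) (opp l)) < eps.

Record Banach := {
  bcar :> Type;
  bzero : bcar;
  badd : bcar -> bcar -> bcar;
  bopp : bcar -> bcar;
  bscal : R -> bcar -> bcar;
  bnorm : bcar -> R;
  b_vs : vs_axioms bcar bzero badd bopp bscal;
  b_norm_def : forall x, bnorm x = 0 -> x = bzero;
  b_norm_hom : forall a x, bnorm (bscal a x) = Rabs a * bnorm x;
  b_norm_tri : forall x y, bnorm (badd x y) <= bnorm x + bnorm y;
  b_complete : complete_wrt bcar badd bopp bnorm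
}.

Definition bsub (V : Banach) (x y : V) : V := badd V x (bopp V y).

Record Hilbert := {
  hcar :> Type;
  hzero : hcar;
  hadd : hcar -> hcar -> hcar;
  hopp : hcar -> hcar;
  hscal : R -> hcar -> hcar;
  hinner : hcar -> hcar -> R;
  h_vs : vs_axioms hcar hzero hadd hopp hscal;
  h_inner_sym : forall x y, hinner x y = hinner y x;
  h_inner_add : forall x y z, hinner (hadd x y) z = hinner x z + hinner y z;
  h_inner_scal : forall a x y, hinner (hscal a x) y = a * hinner x y;
  h_inner_pos : forall x, 0 <= hinner x x;
  h_inner_def : forall x, hinner x x = 0 -> x = hzero;
  h_complete : complete_wrt hcar hadd hopp (fun x => sqrt (hinner x x))
}.

Definition hnorm (H : Hilbert) (x : H) : R := sqrt (hinner H x x).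
Definition hsub (H : Hilbert) (x y : H) : H := hadd H x (hopp H y).

Definition is_linear (V : Banach) (H : Hilbert) (T : V -> H) : Prop :=
  (forall x y, T (badd V x y) = hadd H (T x) (T y)) /\
  (forall a x, T (bscal V a x) = hscal H a (T x)).

Definition is_bounded_op (V : Banach) (H : Hilbert) (T : V -> H) : Prop :=
  exists M, forall x, hnorm H (T x) <= M * bnorm V x.

Definition is_compact_op (V : Banach) (H : Hilbert) (T : V -> H) : Prop :=
  forall u : nat -> V, (exists M, forall n, bnorm V (u n) <= M) ->
    exists (phi : nat -> nat) (l : H),
      (forall n, (phi n < phi (S n))%nat) /\
      (forall eps, 0 < eps -> exists N, forall n, (N <= n)%nat ->
          hnorm H (hsub H (T (u (phi n))) l) < eps).

Definition in_dual (V : Banach) (p : V -> R) : Prop :=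
  (forall x y, p (badd V x y) = p x + p y) /\
  (forall a x, p (bscal V a x) = a * p x) /\
  (exists M, forall x, Rabs (p x) <= M * bnorm V x).

Definition adjoint_app (V : Banach) (H : Hilbert) (T : V -> H) (g : H) : V -> R :=
  fun v => hinner H g (T v).

Definition convex_fun (V : Banach) (J : V -> R) : Prop :=
  forall x y t, 0 <= t <= 1 ->
    J (badd V (bscal V t x) (bscal V (1 - t) y)) <= t * J x + (1 - t) * J y.

Definition subgradient (V : Banach) (J : V -> R) (u : V) (p : V -> R) : Prop :=
  in_dual V p /\ forall w, J w >= J u + p (bsub V w u).

Definition bregman (V : Banach) (J : V -> R) (p : V -> R) (u ustar : V) : R :=
  J u - J ustar - p (bsub V u ustar).

Definition concave_index_function (Psi : R -> R) : Prop :=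
  Psi 0 = 0 /\
  (forall x y, 0 <= x -> x < y -> Psi x < Psi y) /\
  (forall x, 0 <= x -> forall eps, 0 < eps -> exists d, 0 < d /\
      forall y, 0 <= y -> Rabs (y - x) < d -> Rabs (Psi y - Psi x) < eps) /\
  (forall x y t, 0 <= x -> 0 <= y -> 0 <= t <= 1 ->
      t * Psi x + (1 - t) * Psi y <= Psi (t * x + (1 - t) * y)).

Definition tikhonov_minimizer (V : Banach) (H : Hilbert) (T : V -> H) (J : V -> R)
  (fd : H) (alpha : R) (phi : V) : Prop :=
  forall psi, / 2 * (hnorm H (hsub H (T phi) fd)) ^ 2 + alpha * J phi
              <= / 2 * (hnorm H (hsub H (T psi) fd)) ^ 2 + alpha * J psi.

Definition J_minimizing_solution (V : Banach) (H : Hilbert) (T : V -> H) (J : V -> R)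
  (f : H) (phi : V) : Prop :=
  T phi = f /\ forall psi, T psi = f -> J phi <= J psi.

(* Main.v *)
Require Import Defs.
From Stdlib Require Import Reals Lra.
Open Scope R_scope.

Lemma hinner_zero (H : Hilbert) z : hinner H (hzero H) z = 0.
Proof.
  destruct (h_vs H) as [_ [_ [Hz _]]].
  pose proof (h_inner_add H (hzero H) (hzero H) z) as E.
  rewrite Hz in E. lra.
Qed.

Lemma hinner_opp (H : Hilbert) x z : hinner H (hopp H x) z = - hinner H x z.
Proof.
  destruct (h_vs H) as [_ [_ [_ [Hop _]]]].
  pose proof (h_inner_add H x (hopp H x) z) as E.
  rewrite Hop, hinner_zero in E. lra.
Qed.

Lemma hinner_sub_l (H : Hilbert) x y z :
  hinner H (hsub H x y) z = hinner H x z - hinner H y z.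
Proof. unfold hsub. rewrite h_inner_add, hinner_opp. lra. Qed.

Lemma hinner_sub_r (H : Hilbert) x y z :
  hinner H z (hsub H x y) = hinner H z x - hinner H z y.
Proof.
  rewrite (h_inner_sym H z). rewrite hinner_sub_l.
  rewrite (h_inner_sym H x), (h_inner_sym H y). lra.
Qed.

Lemma hinner_add_r (H : Hilbert) x y z :
  hinner H z (hadd H x y) = hinner H z x + hinner H z y.
Proof.
  rewrite (h_inner_sym H z), h_inner_add, (h_inner_sym H x), (h_inner_sym H y). lra.
Qed.

Theorem mainTheorem9
  (V : Banach) (H : Hilbert) (T : V -> H) (J : V -> R)
  (HTlin : is_linear V H T) (HTbd : is_bounded_op V H T)
  (HTinj : forall x y, T x = T y -> x = y) (HTcomp : is_compact_op V H T)
  (HJconv : convex_fun V J) (HJnn : forall x, 0 <= J x)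
  (fdag : H) (phidag : V) (Hdag : J_minimizing_solution V H T J fdag phidag)
  (pdag : V -> R) (Hpdag : subgradient V J phidag pdag)
  (tau_lo tau_hi : R) (Htau : 1 < tau_lo <= tau_hi)
  (sigma : R) (Hsigma : 0 < sigma <= 1)
  (Psi : R -> R) (HPsi : concave_index_function Psi)
  (HVSC : forall phi, sigma / 2 * bregman V J pdag phi phidag
                      <= J phi - J phidag + Psi (hnorm H (hsub H (T phi) (T phidag)))) :
  exists C delta0, 0 < delta0 /\
    forall delta fd alpha phi,
      0 < delta < delta0 ->
      hnorm H (hsub H fdag fd) <= delta ->
      0 < alpha ->
      tikhonov_minimizer V H T J fd alpha phi ->
      tau_lo * delta <= hnorm H (hsub H (T phi) fd) <= tau_hi * delta ->
      bregman V J pdag phi phidag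
        + bregman V J (fun v => / alpha * adjoint_app V H T (hsub H fd (T phi)) v) phidag phi
        <= C * Psi delta.
Proof.
  set (k := 2 * tau_hi + 2).
  exists ((2 / sigma + 1) * k), 1. split; [lra|].
  intros delta fd alpha phi Hd He Ha Hmin Hr.
  destruct Hdag as [HTd _].
  destruct HPsi as [HP0 [HPmon [_ HPconc]]].
  destruct HTlin as [HTadd HTscal].
  set (a := T phi). set (f := fd). set (g := fdag).
  set (A := hinner H a a). set (F := hinner H f f). set (G := hinner H g g).
  set (AF := hinner H a f). set (AG := hinner H a g). set (FG := hinner H f g).
  assert (Eq : forall x y, hinner H (hsub H x y) (hsub H x y)
                = hinner H x x - 2 * hinner H x y + hinner H y y).
  { intros x y. rewrite hinner_sub_l, !hinner_sub_r, (h_inner_sym H y x). lra. }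
  pose proof (h_inner_pos H (hsub H a f)) as P1.
  pose proof (h_inner_pos H (hsub H g f)) as P2.
  pose proof (h_inner_pos H (hsub H g a)) as P3.
  pose proof (h_inner_pos H (hadd H (hsub H a f) (hsub H g f))) as P4.
  rewrite h_inner_add, !hinner_add_r, !hinner_sub_l, !hinner_sub_r in P4.
  rewrite Eq in P1, P2, P3.
  fold A F G AF AG FG in P1, P2, P3.
  rewrite (h_inner_sym H g a), (h_inner_sym H g f), (h_inner_sym H f a) in P4.
  rewrite (h_inner_sym H g f) in P2. rewrite (h_inner_sym H g a) in P3.
  fold A F G AF AG FG in P1, P2, P3, P4.
  unfold hnorm in He, Hr. fold a f g in He, Hr. rewrite Eq in He, Hr.
  rewrite (h_inner_sym H g f) in He. fold A F G AF AG FG in He, Hr.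
  set (Q := A - 2 * AF + F) in Hr, P1.
  set (E := G - 2 * FG + F) in He, P2.
  assert (HE : E <= delta ^ 2).
  { rewrite <- (pow2_sqrt E) by lra. apply pow_incr. split; [apply sqrt_pos|lra]. }
  assert (HQ : tau_lo ^ 2 * delta ^ 2 <= Q <= tau_hi ^ 2 * delta ^ 2).
  { rewrite <- (pow2_sqrt Q) by lra. rewrite <- !Rpow_mult_distr.
    pose proof (sqrt_pos Q). assert (0 <= tau_lo * delta) by nra. split; apply pow_incr; lra. }
  pose proof (Hmin phidag) as Hm. rewrite HTd in Hm. unfold hnorm in Hm. fold a f g in Hm.
  rewrite !Eq in Hm. rewrite (h_inner_sym H g f) in Hm.
  fold a f g A F G AF AG FG Q E in Hm.
  rewrite !pow2_sqrt in Hm by lra.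
  assert (HJ : J phi <= J phidag).
  { assert (tau_lo ^ 2 * delta ^ 2 > delta ^ 2).
    { assert (tau_lo ^ 2 > 1) by nra. assert (delta ^ 2 > 0) by nra. nra. }
    nra. }
  set (x := hnorm H (hsub H a g)).
  assert (Hx0 : 0 <= x) by apply sqrt_pos.
  assert (Hxk : x <= k * delta).
  { unfold x, hnorm. rewrite Eq. fold A G AG.
    rewrite <- (sqrt_pow2 (k * delta)) by (unfold k; nra).
    apply sqrt_le_1_alt. assert (G - 2 * AG + A <= 2 * Q + 2 * E) by (unfold Q, E; lra).
    assert (0 < delta ^ 2) by nra. assert (2 * tau_hi ^ 2 + 2 <= k ^ 2) by (unfold k; nra).
    replace ((k * delta) ^ 2) with (k ^ 2 * delta ^ 2) by ring. nra. }
  assert (HPx : Psi x <= Psi (k * delta)).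
  { destruct (Req_dec x (k * delta)) as [->|n]; [lra|].
    left. apply HPmon; lra. }
  assert (HPk : Psi (k * delta) <= k * Psi delta).
  { pose proof (HPconc (k * delta) 0 (/ k)) as C0.
    assert (k >= 2) by (unfold k; lra).
    rewrite HP0 in C0.
    assert (/ k * (k * delta) + (1 - / k) * 0 = delta) as EE by (field; lra).
    rewrite EE in C0.
    assert (0 < / k) by (apply Rinv_0_lt_compat; lra).
    assert (/ k <= 1) by (rewrite <- Rinv_1; apply Rinv_le_contravar; lra).
    assert (H3 : / k * Psi (k * delta) <= Psi delta).
    { assert (Hkd : 0 <= k * delta) by nra. specialize (C0 Hkd (Rle_refl 0) (conj (Rlt_le _ _ H1) H2)). lra. }
    apply (Rmult_le_compat_l k) in H3; [|lra].
    rewrite <- Rmult_assoc, Rinv_r in H3 by lra. lra. }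
  assert (HPsi0 : 0 <= Psi x).
  { destruct (Req_dec x 0) as [->|n]; [lra|]. rewrite <- HP0. left. apply HPmon; lra. }
  set (D1 := bregman V J pdag phi phidag).
  assert (HD1 : 0 <= D1).
  { destruct Hpdag as [_ Hs]. specialize (Hs phi). unfold D1, bregman. lra. }
  pose proof (HVSC phi) as HV. fold D1 a in HV. rewrite HTd in HV. fold g x in HV.
  assert (HD1b : D1 <= 2 / sigma * Psi x).
  { apply (Rmult_le_reg_l (sigma / 2)). lra.
    replace (sigma / 2 * (2 / sigma * Psi x)) with (Psi x) by (field; lra). lra. }
  assert (HT0 : forall z, hinner H z (T (bzero V)) = 0).
  { intros z. destruct (b_vs V) as [_ [_ [Hz _]]].
    pose proof (HTadd (bzero V) (bzero V)) as E0. rewrite Hz in E0.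
    assert (hinner H z (T (bzero V)) = hinner H z (T (bzero V)) + hinner H z (T (bzero V))).
    { rewrite <- hinner_add_r. rewrite <- E0. reflexivity. }
    lra. }
  assert (HTopp : forall z, hinner H z (T (bopp V phi)) = - hinner H z a).
  { intros z. destruct (b_vs V) as [_ [_ [_ [Hop _]]]].
    pose proof (HTadd phi (bopp V phi)) as E0. rewrite Hop in E0.
    pose proof (HT0 z) as E1. rewrite E0, hinner_add_r in E1. fold a in E1. lra. }
  unfold D1 in *. unfold bregman at 2. unfold adjoint_app, bsub. fold D1.
  rewrite HTadd, hinner_add_r, HTopp, HTd. fold a f g.
  rewrite !hinner_sub_l. fold A F G AF AG FG D1.
  rewrite (h_inner_sym H f a). fold AF.
  assert (delta ^ 2 <= tau_lo ^ 2 * delta ^ 2) by (assert (1 <= tau_lo ^ 2) by nra; nra).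
  assert (HS : 0 <= FG - AG + - (AF - A)) by (unfold Q, E in *; lra).
  assert (0 <= / alpha * (FG - AG + - (AF - A))).
  { apply Rmult_le_pos; [left; apply Rinv_0_lt_compat; lra | lra]. }
  assert (HPd : 0 <= Psi delta).
  { rewrite <- HP0. left. apply HPmon; lra. }
  assert (0 < k) by (unfold k; lra).
  assert (Psi x <= k * Psi delta) by lra.
  assert (2 / sigma > 0) by (apply Rdiv_lt_0_compat; lra).
  assert (2 / sigma * Psi x <= 2 / sigma * (k * Psi delta)) by (apply Rmult_le_compat_l; lra).
  unfold D1 in *. assert (0 <= sigma / 2 * bregman V J pdag phi phidag) by (apply Rmult_le_pos; lra).
  replace ((2 / sigma + 1) * k * Psi delta) with (2 / sigma * (k * Psi delta) + k * Psi delta) by ring.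
  lra.
Qed.
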